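(* Let $\mathcal{R}$ be a ring and let $(\mathcal{C}^{\bullet},\partial)$ be a bigraded cochain complex of $\mathcal{R}$-modules as described in the context. Then there are two commutative diagrams with exact rows and exact columns. The first has rows \[ 0\to B^{2}(\mathcal{C},\partial)\cap\mathcal{C}^{2,0}\hookrightarrow B^{2}(\mathcal{C},\partial)\xrightarrow{\pi_{1}}\mathcal{B}^{2}_{1}\to0, \] \[ 0\to Z^{2}(\mathcal{N}_{0},\overline{\partial})\hookrightarrow Z^{2}(\mathcal{C},\partial)\xrightarrow{\pi_{1}}\ker(\rho_{2})\to0, \] \[ 0\to\frac{Z^{2}(\mathcal{N}_{0},\overline{\partial})}{B^{2}(\mathcal{C},\partial)\cap\mathcal{C}^{2,0}}\to H^{2}(\mathcal{C},\partial)\to\frac{\ker(\rho_{2})}{\mathcal{B}^{2}_{1}}\to0, \] and the second has rows \[ 0\to\mathcal{B}^{2}_{1}\cap\mathcal{C}^{1,1}\hookrightarrow\mathcal{B}^{2}_{1}\xrightarrow{\pi_{2}}B^{2}(\mathcal{C}^{0,\bullet},\partial_{0,1})\to0, \] \[ 0\to\ker(\varrho_{2})\hookrightarrow\ker(\rho_{2})\xrightarrow{\pi_{2}}\mathcal{Z}^{2}_{2}\to0, \] \[ 0\to\frac{\ker(\varrho_{2})}{\mathcal{B}^{2}_{1}\cap\mathcal{C}^{1,1}}\to\frac{\ker(\rho_{2})}{\mathcal{B}^{2}_{1}}\to\frac{\mathcal{Z}^{2}_{2}}{B^{2}(\mathcal{C}^{0,\bullet},\partial_{0,1})}\to0. \]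 In each diagram the vertical maps from the first to the second row are inclusions, those from the second to the third row are the canonical quotient projections, and the maps of the third row are induced by those of the second row.
   Context: Setting: $\mathcal{C}^{\bullet}=\bigoplus_{k}\mathcal{C}^{k}$ is a graded $\mathcal{R}$-module with compatible bigrading $\mathcal{C}^{k}=\bigoplus_{p+q=k}\mathcal{C}^{p,q}$, $\mathcal{C}^{p,q}=\{0\}$ if $p<0$ or $q<0$; $\partial$ is $\mathcal{R}$-linear of degree $1$, $\partial^{2}=0$, and $\partial=\partial_{2,-1}+\partial_{1,0}+\partial_{0,1}$ with $\partial_{i,j}(\mathcal{C}^{p,q})\subseteq\mathcal{C}^{p+i,q+j}$. For $\eta\in\mathcal{C}^{k}$, $\eta_{p,q}$ is its $\mathcal{C}^{p,q}$-component. $G^{q}\mathcal{C}:=\bigoplus_{j\geq q}\mathcal{C}^{i,j}$ and $\pi_{q}:\mathcal{C}\to G^{q}\mathcal{C}$ is the projection along the bigrading. $Z,B,H$ denote cocycles, coboundaries, cohomology; $(\mathcal{C}^{0,\bullet},\partial_{0,1})$ is a cochain complex. Let $\mathcal{N}^{p,q}:=\ker(\partial_{0,1}|_{\mathcal{C}^{p,q}})\cap\ker(\partial_{2,-1}|_{\mathcal{C}^{p,q}})$ and, for $q\ge0$, $\mathcal{N}_{q}:=\bigoplus_{p}\mathcal{N}^{p-q,q}$ (the degree-$m$ part being $\mathcal{N}^{m-q,q}$); each $\mathcal{N}_{q}$ is a subcomplex of $(\mathcal{C},\partial)$, with differential $\overline{\partial}:=\partial|_{\mathcal{N}_q}=\partial_{1,0}|_{\mathcal{N}_q}$.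 Let $\mathcal{M}^{k}:=\{\eta\in\mathcal{C}^{k}\mid(\partial\eta)_{i,j}\in B^{k+1}(\mathcal{N}_{j},\overline{\partial})\ \text{for all } i+j=k+1\}$, $\mathcal{Z}^{k}_{q}:=\{\pi_{q}(\eta)\mid\eta\in\mathcal{M}^{k},\ \pi_{q}(\partial\eta)=0\}$ and $\mathcal{B}^{k}_{q}:=\pi_{q}(B^{k}(\mathcal{C},\partial))$. Let $\mathcal{A}^{k}:=\{\pi_{1}(\eta)\mid\eta\in\mathcal{C}^{k},\ \pi_{1}(\partial\eta)=0\}$ and $\mathcal{J}^{k}:=\mathcal{A}^{k}\cap\mathcal{C}^{k-1,1}$. For $\xi\in\mathcal{A}^{k}$ and any $\eta\in\mathcal{C}^{k}$ with $\pi_{1}\eta=\xi$, $\pi_{1}(\partial\eta)=0$, the element $\partial_{2,-1}\xi_{k-1,1}+\partial_{1,0}\eta_{k,0}$ is a $(k+1)$-cocycle of $(\mathcal{N}_{0},\overline{\partial})$ whose class depends only on $\xi$; this defines the linear map $\rho_{k}:\mathcal{A}^{k}\to H^{k+1}(\mathcal{N}_{0},\overline{\partial})$, $\rho_{k}(\xi):=[\partial_{2,-1}\xi_{k-1,1}+\partial_{1,0}\eta_{k,0}]$, and $\varrho_{k}:=\rho_{k}|_{\mathcal{J}^{k}}$. *)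

(* Defs.v *)
From HB Require Import structures.
From mathcomp Require Import all_boot all_algebra.
Set Implicit Arguments. Unset Strict Implicit. Unset Printing Implicit Defensive.
Import GRing.Theory.
Local Open Scope ring_scope.

(** The bigraded pieces are [D p q] (= C^{p,q}, p q : nat, so C^{p,q} = 0 for
    negative indices is built in).
    The total space is represented by [Tot] = families (x p q)_{p,q};
    an element of C^k is a family supported on {p+q = k}. *)

Section Bigraded.
Variable R : pzRingType.
Variable D : nat -> nat -> lmodType R.
Variable d21 : forall p q, {linear D p q.+1 -> D p.+2 q}.
Variable d10 : forall p q, {linear D p q -> D p.+1 q}.
Variable d01 : forall p q, {linear D p q -> D p q.+1}.

Definition Tot := forall p q, D p q.
Definition tzero : Tot := fun p q => 0.
Definition tadd (x y : Tot) : Tot := fun p q => x p q + y p q.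
Definition topp (x : Tot) : Tot := fun p q => - x p q.
Definition tscale (a : R) (x : Tot) : Tot := fun p q => a *: x p q.
Definition tsub (x y : Tot) : Tot := tadd x (topp y).
Definition tid (x : Tot) : Tot := x.

Definition inDeg (k : nat) (x : Tot) : Prop :=
  forall p q, (p + q)%N <> k -> x p q = 0.
Definition inBideg (p q : nat) (x : Tot) : Prop :=
  forall p' q', (p', q') <> (p, q) -> x p' q' = 0.
Definition bproj (p q : nat) (x : Tot) : Tot :=
  fun p' q' => if (p' == p) && (q' == q) then x p' q' else 0.
(* pi_q : projection onto G^q C = \bigoplus_{j >= q} C^{i,j} *)
Definition piq (q : nat) (x : Tot) : Tot :=
  fun p' q' => if (q <= q')%N then x p' q' else 0.

Definition D21 (x : Tot) : Tot := fun p q =>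
  match p as p0 return D p0 q with
  | p'.+2 => d21 p' q (x p' q.+1)
  | _ => 0
  end.
Definition D10 (x : Tot) : Tot := fun p q =>
  match p as p0 return D p0 q with
  | p'.+1 => d10 p' q (x p' q)
  | 0 => 0
  end.
Definition D01 (x : Tot) : Tot := fun p q =>
  match q as q0 return D p q0 with
  | q'.+1 => d01 p q' (x p q')
  | 0 => 0
  end.
Definition dd (x : Tot) : Tot := tadd (tadd (D21 x) (D10 x)) (D01 x).

Definition ZC (k : nat) (x : Tot) : Prop := inDeg k x /\ dd x = tzero.
(* B^{k+1}(C, d) *)
Definition cobC (k : nat) (x : Tot) : Prop := exists y, inDeg k y /\ x = dd y.

Definition isN (p q : nat) (x : Tot) : Prop :=
  inBideg p q x /\ D01 x = tzero /\ D21 x = tzero.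
(* degree-m part of N_q, namely N^{m-q,q} (= 0 when m < q) *)
Definition inNq (q m : nat) (x : Tot) : Prop :=
  if (q <= m)%N then isN (m - q) q x else x = tzero.
Definition ZN (q m : nat) (x : Tot) : Prop := inNq q m x /\ dd x = tzero.
(* B^{m+1}(N_q, dbar) *)
Definition cobN (q m : nat) (x : Tot) : Prop :=
  exists y, inNq q m y /\ x = dd y.
(* B^{m+1}(C^{0,.}, d_{0,1}) (viewed inside C) *)
Definition cob0 (m : nat) (x : Tot) : Prop :=
  exists y, inBideg 0 m y /\ x = D01 y.

Definition inM (k : nat) (eta : Tot) : Prop :=
  inDeg k eta /\
  forall i j, (i + j)%N = k.+1 -> cobN j k (bproj i j (dd eta)).
Definition calZ (k q : nat) (x : Tot) : Prop :=
  exists eta, inM k eta /\ piq q (dd eta) = tzero /\ x = piq q eta.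
(* \mathcal{B}^{k+1}_q = pi_q(B^{k+1}(C, d)) *)
Definition calB (k q : nat) (x : Tot) : Prop :=
  exists eta, inDeg k eta /\ x = piq q (dd eta).
Definition calA (k : nat) (xi : Tot) : Prop :=
  exists eta, inDeg k eta /\ piq 1 (dd eta) = tzero /\ xi = piq 1 eta.
(* representative  d_{2,-1} xi_{k-1,1} + d_{1,0} eta_{k,0}  of rho_k(xi) *)
Definition rho_rep (k : nat) (xi eta : Tot) : Tot :=
  tadd (D21 (bproj k.-1 1 xi)) (D10 (bproj k 0 eta)).
(* ker(rho_k): xi \in A^k whose class rho_k(xi) \in H^{k+1}(N_0, dbar)
   vanishes, i.e. the representative lies in B^{k+1}(N_0, dbar)
   (for any admissible choice of eta). *)
Definition kerrho (k : nat) (xi : Tot) : Prop :=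
  calA k xi /\
  forall eta, inDeg k eta -> piq 1 eta = xi -> piq 1 (dd eta) = tzero ->
    cobN 0 k (rho_rep k xi eta).
(* ker(varrho_k), varrho_k = rho_k restricted to J^k = A^k \cap C^{k-1,1} *)
Definition kervarrho (k : nat) (xi : Tot) : Prop :=
  kerrho k xi /\ inBideg k.-1 1 xi.

Definition pI (A B : Tot -> Prop) (x : Tot) : Prop := A x /\ B x.
Definition p0 (x : Tot) : Prop := x = tzero.

(** Subquotients: a pair (A, B) stands for the module A / B, where B and A
    are submodules of the total space with B \subseteq A.  A submodule A is
    the subquotient (A, 0). *)
Definition SQ := ((Tot -> Prop) * (Tot -> Prop))%type.

Definition submod (A : Tot -> Prop) : Prop :=
  A tzero /\ (forall x y, A x -> A y -> A (tadd x y)) /\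
  (forall a x, A x -> A (tscale a x)).
Definition subquot (X : SQ) : Prop :=
  submod X.1 /\ submod X.2 /\ (forall x, X.2 x -> X.1 x).
Definition induced (f : Tot -> Tot) (X Y : SQ) : Prop :=
  (forall x, X.1 x -> Y.1 (f x)) /\ (forall x, X.2 x -> Y.2 (f x)).

Definition ses (X Y Z : SQ) (f g : Tot -> Tot) : Prop :=
  [/\ subquot X, subquot Y, subquot Z, induced f X Y & induced g Y Z] /\
  [/\ (* injectivity of f *)
      (forall x, X.1 x -> Y.2 (f x) -> X.2 x),
      (* g o f = 0 *)
      (forall x, X.1 x -> Z.2 (g (f x))),
      (* ker g \subseteq im f *)
      (forall y, Y.1 y -> Z.2 (g y) -> exists2 x, X.1 x & Y.2 (tsub y (f x)))
    & (* surjectivity of g *)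
      (forall z, Z.1 z -> exists2 y, Y.1 y & Z.2 (tsub (g y) z))].

Definition commsq (X Y' : SQ) (f u v f' : Tot -> Tot) : Prop :=
  forall x, X.1 x -> Y'.2 (tsub (v (f x)) (f' (u x))).

Definition diagram33 (X11 X12 X13 X21 X22 X23 X31 X32 X33 : SQ)
  (f1 g1 f2 g2 f3 g3 : Tot -> Tot)
  (u1 v1 u2 v2 u3 v3 : Tot -> Tot) : Prop :=
  [/\ ses X11 X12 X13 f1 g1, ses X21 X22 X23 f2 g2 & ses X31 X32 X33 f3 g3] /\
  [/\ ses X11 X21 X31 u1 v1, ses X12 X22 X32 u2 v2 & ses X13 X23 X33 u3 v3] /\
  [/\ commsq X11 X22 f1 u1 u2 f2, commsq X12 X23 g1 u2 u3 g2,
      commsq X21 X32 f2 v1 v2 f3 & commsq X22 X33 g2 v2 v3 g3].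

End Bigraded.

(* Main.v *)
Require Import Defs.
From HB Require Import structures.
From mathcomp Require Import all_boot all_algebra zify.
From Stdlib Require Import FunctionalExtensionality.
Set Implicit Arguments. Unset Strict Implicit. Unset Printing Implicit Defensive.
Import GRing.Theory.
Local Open Scope ring_scope.

Section S.
Variable R : pzRingType.
Variable D : nat -> nat -> lmodType R.
Variable d21 : forall p q, {linear D p q.+1 -> D p.+2 q}.
Variable d10 : forall p q, {linear D p q -> D p.+1 q}.
Variable d01 : forall p q, {linear D p q -> D p q.+1}.
Local Notation T := (Tot D).
Local Notation ddd := (dd d21 d10 d01).
Local Notation t0 := (tzero D).
Hypothesis dd2 : forall k (x : T), inDeg k x -> ddd (ddd x) = t0.

Lemma textE (x y : T) : (forall p q, x p q = y p q) -> x = y.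
Proof. move=> H; do 2 (apply: functional_extensionality_dep => ?); exact: H. Qed.

Ltac kill := repeat match goal with
 | H : inDeg ?k ?x |- context [?x ?a ?b] => rewrite (H a b); [|lia]
 | H : inBideg ?p ?q ?x |- context [?x ?a ?b] => rewrite (H a b); [| (let Hc := fresh in move=> Hc; injection Hc; lia) || congruence ]
 end; rewrite ?linear0 ?addr0 ?add0r ?oppr0 ?scaler0.

Lemma tsubxx (x : T) : tsub x x = t0.
Proof. by apply: textE => p q; rewrite /tsub /tadd /topp subrr. Qed.
Lemma tsubx0 (x : T) : tsub x t0 = x.
Proof. by apply: textE => p q; rewrite /tsub /tadd /topp /tzero oppr0 addr0. Qed.
Lemma tsubK (y e : T) : tsub y (tsub y e) = e.
Proof. by apply: textE => p q; rewrite /tsub /tadd /topp opprD opprK addrA subrr add0r. Qed.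
Lemma toppE (x : T) : topp x = tscale (-1) x.
Proof. by apply: textE => p q; rewrite /topp /tscale scaleN1r. Qed.

Record lin (f : T -> T) : Prop := Lin {
  linD : forall x y, f (tadd x y) = tadd (f x) (f y);
  linZ : forall a x, f (tscale a x) = tscale a (f x) }.

Lemma lin0 f : lin f -> f t0 = t0.
Proof.
move=> [_ hZ]; have e : t0 = tscale 0 t0 by apply: textE => p q; rewrite /tscale scale0r.
by rewrite {1}e hZ; apply: textE => p q; rewrite /tscale scale0r.
Qed.
Lemma linB f x y : lin f -> f (tsub x y) = tsub (f x) (f y).
Proof. by move=> [hD hZ]; rewrite /tsub hD !toppE hZ. Qed.

Lemma lin_D21 : lin (D21 d21).
Proof.
constructor=> [x y|a x]; apply: textE => p q; case: p => [|[|p]];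
  rewrite /tadd /tscale /= ?addr0 ?scaler0 ?linearD ?linearZ //.
Qed.
Lemma lin_D10 : lin (D10 d10).
Proof.
split=> [x y|a x]; apply: textE => p q; case: p => [|p];
  rewrite /tadd /tscale /= ?addr0 ?scaler0 ?linearD ?linearZ //.
Qed.
Lemma lin_D01 : lin (D01 d01).
Proof.
split=> [x y|a x]; apply: textE => p q; case: q => [|q];
  rewrite /tadd /tscale /= ?addr0 ?scaler0 ?linearD ?linearZ //.
Qed.
Lemma lin_add f g : lin f -> lin g -> lin (fun x => tadd (f x) (g x)).
Proof.
move=> [f1 f2] [g1 g2]; constructor=> [x y|a x]; rewrite ?f1 ?g1 ?f2 ?g2;
  apply: textE => p q; rewrite /tadd /tscale ?scalerDr //.
by rewrite addrACA.
Qed.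
Lemma lin_dd : lin ddd.
Proof. exact: (lin_add (lin_add lin_D21 lin_D10) lin_D01). Qed.
Lemma lin_piq k : lin (piq k).
Proof.
by split=> [x y|a x]; apply: textE => p q; rewrite /piq /tadd /tscale; case: ifP; rewrite ?addr0 ?scaler0.
Qed.
Lemma lin_bproj i j : lin (bproj i j).
Proof.
by split=> [x y|a x]; apply: textE => p q; rewrite /bproj /tadd /tscale; case: ifP; rewrite ?addr0 ?scaler0.
Qed.
Lemma lin_comp f g : lin f -> lin g -> lin (fun x => f (g x)).
Proof. by move=> [f1 f2] [g1 g2]; split=> *; rewrite ?g1 ?f1 ?g2 ?f2. Qed.
Lemma lin_id : lin (@tid R D).
Proof. by split. Qed.

Lemma submodB (A : T -> Prop) (x y : T) : submod A -> A x -> A y -> A (tsub x y).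
Proof. by move=> [_ [hD hZ]] hx hy; rewrite /tsub toppE; apply: hD => //; apply: hZ. Qed.
Lemma submod_ext (A B : T -> Prop) : (forall x, A x <-> B x) -> submod A -> submod B.
Proof.
move=> e [h0 [hD hZ]]; split; first by apply/e.
split=> [x y /e hx /e hy|a x /e hx]; apply/e; [exact: hD | exact: hZ].
Qed.
Lemma submod_img (A : T -> Prop) (f : T -> T) : submod A -> lin f -> submod (fun x => exists y, A y /\ x = f y).
Proof.
move=> [h0 [hD hZ]] hf; split; first by exists t0; rewrite lin0.
split=> [x y [x' [hx ->]] [y' [hy ->]]|a x [x' [hx ->]]].
  by exists (tadd x' y'); rewrite (linD hf); split=> //; apply: hD.
by exists (tscale a x'); rewrite (linZ hf); split=> //; apply: hZ.
Qed.
Lemma submod_pre (B : T -> Prop) (f : T -> T) : submod B -> lin f -> submod (fun x => B (f x)).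
Proof.
move=> [h0 [hD hZ]] hf; split; first by rewrite lin0.
by split=> [x y hx hy|a x hx]; rewrite ?(linD hf) ?(linZ hf); [apply: hD|apply: hZ].
Qed.
Lemma submod_and (A B : T -> Prop) : submod A -> submod B -> submod (fun x => A x /\ B x).
Proof.
move=> [a0 [aD aZ]] [b0 [bD bZ]]; split=> //.
by split=> [x y [? ?] [? ?]|a x [? ?]]; split; auto.
Qed.
Lemma submod_pI (A B : T -> Prop) : submod A -> submod B -> submod (pI A B).
Proof. exact: submod_and. Qed.
Lemma submod_p0 : submod (@p0 R D).
Proof.
split=> //; split=> [x y -> ->|a x ->]; apply: textE => p q;
  by rewrite /tadd /tscale /tzero ?addr0 ?scaler0.
Qed.
Lemma submod_ker (A : T -> Prop) (f : T -> T) : submod A -> lin f -> submod (fun x => A x /\ f x = t0).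
Proof. by move=> hA hf; apply: submod_and => //; apply: (submod_pre submod_p0 hf). Qed.
Lemma submod_forall2 (P : nat -> nat -> T -> Prop) :
  (forall i j, submod (P i j)) -> submod (fun x => forall i j, P i j x).
Proof.
move=> hP; split; first by move=> i j; case: (hP i j).
split=> [x y hx hy i j|a x hx i j]; case: (hP i j) => [_ [hD hZ]]; auto.
Qed.
Lemma submod_imp (C : Prop) (P : T -> Prop) : (C -> submod P) -> submod (fun x => C -> P x).
Proof.
move=> hP; split; first by move=> c; case: (hP c).
split=> [x y hx hy c|a x hx c]; case: (hP c) => [_ [hD hZ]]; auto.
Qed.
Lemma submod_inDeg k : submod (@inDeg R D k).
Proof.
split; first by [].
split=> [x y hx hy p q H|a x hx p q H]; rewrite /tadd /tscale ?hx ?hy // ?addr0 ?scaler0 //.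
Qed.
Lemma submod_inBideg i j : submod (@inBideg R D i j).
Proof.
split; first by [].
split=> [x y hx hy p q H|a x hx p q H]; rewrite /tadd /tscale ?hx ?hy // ?addr0 ?scaler0 //.
Qed.
Lemma submod_inNq j m : submod (inNq d21 d01 j m).
Proof.
rewrite /inNq; case: (j <= m)%N; last exact: submod_p0.
apply: submod_and; first exact: submod_inBideg.
apply: submod_and; [exact: (submod_pre submod_p0 lin_D01)|exact: (submod_pre submod_p0 lin_D21)].
Qed.

Lemma bideg_deg i j (x : T) : inBideg i j x -> inDeg (i + j) x.
Proof. by move=> h p q H; apply: h => -[E1 E2]; apply: H; rewrite E1 E2. Qed.

Lemma piq_bideg i j k (x : T) : inBideg i j x -> (j < k)%N -> piq k x = t0.
Proof.
move=> h hk; apply: textE => p q; rewrite /piq; case: ifP => // hq.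
by apply: h => -[_ E]; rewrite E in hq; lia.
Qed.

Lemma bproj_id i j (x : T) : inBideg i j x -> bproj i j x = x.
Proof.
move=> h; apply: textE => p q; rewrite /bproj.
case: (boolP ((p == i) && (q == j))) => // hne.
by rewrite h // => -[E1 E2]; rewrite E1 E2 !eqxx in hne.
Qed.
Lemma bproj_bideg i j (x : T) : inBideg i j (bproj i j x).
Proof.
move=> p q H; rewrite /bproj; case: (boolP ((p == i) && (q == j))) => // /andP [/eqP E1 /eqP E2].
by case: H; rewrite E1 E2.
Qed.

Lemma dd_deg k x : inDeg k x -> inDeg k.+1 (ddd x).
Proof.
move=> hx p q H; rewrite /dd /tadd /D21 /D10 /D01.
case: p H => [|[|p]]; case: q => [|q] H /=; kill; done.
Qed.

Lemma P3 (y : T) : inDeg 2 y -> piq 1 y = t0 -> inBideg 2 0 y.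
Proof.
move=> hy h p q H; case: q H => [|q] H.
  by apply: hy => E; apply: H; congr pair; lia.
by have := congr1 (fun f => f p q.+1) h; rewrite /piq /=.
Qed.

Lemma P4a (w : T) p : inBideg p 0 w -> D21 d21 w = t0.
Proof.
by move=> h; apply: textE => p' q; case: p' => [|[|p']] //=; rewrite h ?linear0 //; congruence.
Qed.

Lemma N20 (w : T) : inDeg 2 w -> piq 1 w = t0 -> piq 1 (ddd w) = t0 -> inNq d21 d01 0 2 w.
Proof.
move=> hw h1 h2; have hb := P3 hw h1; change (isN d21 d01 2 0 w).
split; first done; split; last exact: P4a hb.
apply: textE => p q.
have := congr1 (fun f => f 2%N 1%N) h2; rewrite /piq /dd /tadd /D21 /D10 /D01 /=; kill => H.
case: q => [|q] //=.
case: (boolP ((p == 2) && (q == 0))) => [/andP [/eqP -> /eqP ->] // | hne].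
by rewrite hb ?linear0 // => -[E1 E2]; rewrite E1 E2 in hne.
Qed.

Lemma DR eta : inDeg 2 eta -> piq 1 (ddd eta) = t0 -> ddd eta = rho_rep d21 d10 2 (piq 1 eta) eta.
Proof.
move=> he h1; apply: textE => p q.
have := congr1 (fun f => f p q) h1; rewrite /piq /tzero /rho_rep /dd /tadd /D21 /D10 /D01 /bproj.
case: p => [|[|[|[|p]]]]; case: q => [|[|[|[|q]]]] /= ; kill; try done.
Qed.

Lemma piq21 (x : T) : piq 2 (piq 1 x) = piq 2 x.
Proof.
apply: textE => p q; rewrite /piq; case: ifP => h //; case: ifP => h' //; lia.
Qed.

Lemma P6 eta : inDeg 1 eta -> piq 2 (ddd eta) = D01 d01 (bproj 0 1 eta).
Proof.
move=> he; apply: textE => p q; rewrite /piq /dd /tadd /D21 /D10 /D01 /bproj.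
case: p => [|[|[|p]]]; case: q => [|[|[|q]]] /= ; kill; try done.
Qed.

Lemma P3' eta : inDeg 2 eta -> piq 2 (piq 1 eta) = t0 -> inBideg 1 1 (piq 1 eta).
Proof.
move=> he h p q H; have := congr1 (fun f => f p q) h; rewrite /piq.
case: q H => [|[|q]] H //=.
by move=> _; apply: he => E; apply: H; congr pair; lia.
Qed.

Lemma DEC (y : T) : inDeg 3 y -> piq 2 y = t0 -> y = tadd (bproj 3 0 y) (bproj 2 1 y).
Proof.
move=> hy h; apply: textE => p q; have := congr1 (fun f => f p q) h.
rewrite /piq /tadd /bproj.
case: p => [|[|[|[|p]]]]; case: q => [|[|[|[|q]]]] /= ; kill; try done.
Qed.

Local Notation Z2 := (ZC d21 d10 d01 2).
Local Notation B2 := (cobC d21 d10 d01 1).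
Local Notation B2C20 := (pI B2 (@inBideg R D 2 0)).
Local Notation Z2N0 := (ZN d21 d10 d01 0 2).
Local Notation krho := (kerrho d21 d10 d01 2).
Local Notation kvrho := (kervarrho d21 d10 d01 2).
Local Notation cB21 := (calB d21 d10 d01 1 1).
Local Notation cB21C11 := (pI cB21 (@inBideg R D 1 1)).
Local Notation B2C0 := (cob0 d01 1).
Local Notation cZ22 := (calZ d21 d10 d01 2 2).

Lemma degB k (x y : T) : inDeg k x -> inDeg k y -> inDeg k (tsub x y).
Proof. by move=> hx hy; apply: (submodB (submod_inDeg k)). Qed.

Lemma KR xi : krho xi <-> exists eta, Z2 eta /\ xi = piq 1 eta.
Proof.
split.
  move=> [[eta [he [h1 E]]] hall].
  have [w [hw hwe]] := hall eta he (esym E) h1.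
  have hw' := hw; change (isN d21 d01 2 0 w) in hw'; case: hw' => hwb _.
  exists (tsub eta w); split; first split.
  - by apply: degB => //; apply: (bideg_deg hwb).
  - by rewrite (linB _ _ lin_dd) (DR he h1) -E hwe tsubxx.
  - by rewrite (linB _ _ (lin_piq 1)) (piq_bideg hwb) // tsubx0.
move=> [eta [[he hz] ->]]; split.
  by exists eta; split=> //; split=> //; rewrite hz lin0 //; apply: lin_piq.
move=> e he' hpe h1'; have := DR he' h1'; rewrite hpe => <-.
exists (tsub e eta); split.
  apply: N20; first exact: degB.
    by rewrite (linB _ _ (lin_piq 1)) hpe tsubxx.
  by rewrite (linB _ _ lin_dd) hz tsubx0.
by rewrite (linB _ _ lin_dd) hz tsubx0.
Qed.

Lemma Z2_krho eta : Z2 eta -> krho (piq 1 eta).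
Proof. by move=> h; apply/KR; exists eta. Qed.

Lemma Z2_cZ22 eta : Z2 eta -> cZ22 (piq 2 eta).
Proof.
move=> [he hz]; exists eta; split; last by rewrite hz lin0 //; apply: lin_piq.
split=> // i j _; rewrite hz lin0; last exact: lin_bproj.
by exists t0; split; [case: (submod_inNq j 2) | rewrite lin0 //; apply: lin_dd].
Qed.

Lemma cZ22_surj x : cZ22 x -> exists eta, Z2 eta /\ x = piq 2 eta.
Proof.
move=> [eta [[he hM] [h2 ->]]].
have [w0 [hw0 e0]] := hM 3%N 0%N erefl.
have [w1 [hw1 e1]] := hM 2%N 1%N erefl.
change (isN d21 d01 2 0 w0) in hw0; change (isN d21 d01 1 1 w1) in hw1.
case: hw0 => hb0 _; case: hw1 => hb1 _.
exists (tsub (tsub eta w1) w0); split; first split.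
- by apply: degB; [apply: degB => //|]; [apply: (bideg_deg hb1)|apply: (bideg_deg hb0)].
- rewrite !(linB _ _ lin_dd) -e0 -e1 {1}(DEC (dd_deg he) h2).
  by apply: textE => p q; rewrite /tsub /tadd /topp /tzero addrK subrr.
- by rewrite !(linB _ _ (lin_piq 2)) (piq_bideg hb1) // (piq_bideg hb0) // !tsubx0.
Qed.

Lemma B2_Z2 x : B2 x -> Z2 x.
Proof. by move=> [y [hy ->]]; split; [apply: dd_deg | apply: (dd2 hy)]. Qed.

Lemma cB21_krho x : cB21 x -> krho x.
Proof. by move=> [e [he ->]]; apply: Z2_krho; apply: B2_Z2; exists e. Qed.

Lemma B2C0_cZ22 x : B2C0 x -> cZ22 x.
Proof.
move=> [y [hy ->]].
have hy1 : inDeg 1 y := bideg_deg hy.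
rewrite -(bproj_id hy) -(P6 hy1); apply: Z2_cZ22; apply: B2_Z2; by exists y.
Qed.

Lemma cB21_B2C0 x : cB21 x -> B2C0 (piq 2 x).
Proof.
move=> [e [he ->]]; exists (bproj 0 1 e); split; first exact: bproj_bideg.
by rewrite piq21 P6.
Qed.

Local Notation z := (@p0 R D).

Lemma sm_Z2 : submod Z2.
Proof. exact: (submod_ker (submod_inDeg 2) lin_dd). Qed.
Lemma sm_B2 : submod B2.
Proof. exact: (submod_img (submod_inDeg 1) lin_dd). Qed.
Lemma sm_B2C20 : submod B2C20.
Proof. exact: (submod_pI sm_B2 (submod_inBideg 2 0)). Qed.
Lemma sm_Z2N0 : submod Z2N0.
Proof. exact: (submod_ker (submod_inNq 0 2) lin_dd). Qed.
Lemma sm_krho : submod krho.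
Proof.
apply: (submod_ext _ (submod_img sm_Z2 (lin_piq 1))) => x.
by split; [move=> h; apply/KR; exact: h | move/KR].
Qed.
Lemma sm_kvrho : submod kvrho.
Proof. exact: (submod_pI sm_krho (submod_inBideg 1 1)). Qed.
Lemma sm_cB21 : submod cB21.
Proof. exact: (submod_img (submod_inDeg 1) (lin_comp (lin_piq 1) lin_dd)). Qed.
Lemma sm_cB21C11 : submod cB21C11.
Proof. exact: (submod_pI sm_cB21 (submod_inBideg 1 1)). Qed.
Lemma sm_B2C0 : submod B2C0.
Proof. exact: (submod_img (submod_inBideg 0 1) lin_D01). Qed.
Lemma sm_cobN j m : submod (cobN d21 d10 d01 j m).
Proof. exact: (submod_img (submod_inNq j m) lin_dd). Qed.
Lemma sm_inM2 : submod (inM d21 d10 d01 2).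
Proof.
apply: (submod_and (submod_inDeg 2)); apply: submod_forall2 => i j.
apply: submod_imp => _; exact: (submod_pre (sm_cobN j 2) (lin_comp (lin_bproj i j) lin_dd)).
Qed.
Lemma sm_cZ22 : submod cZ22.
Proof.
apply: (submod_ext _ (submod_img (submod_ker sm_inM2 (lin_comp (lin_piq 2) lin_dd)) (lin_piq 2))) => x.
by split=> [[e [[a b] c]]|[e [a [b c]]]]; exists e.
Qed.

Lemma subquot_A0 (A : T -> Prop) : submod A -> subquot (A, z).
Proof. move=> hA; split=> //; split; [exact: submod_p0 | move=> x /= ->; by case: hA]. Qed.
Lemma subquot_AB (A B : T -> Prop) : submod A -> submod B -> (forall x, B x -> A x) -> subquot (A, B).
Proof. by move=> hA hB hBA; split. Qed.

Lemma col_ses (A B : T -> Prop) : submod A -> submod B -> (forall x, B x -> A x) ->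
  ses (B, z) (A, z) (A, B) (@tid R D) (@tid R D).
Proof.
move=> hA hB hBA; split; split.
- exact: subquot_A0.
- exact: subquot_A0.
- exact: subquot_AB.
- by split=> x /=; [apply: hBA | ].
- by split=> x //= ->; case: hB.
- by move=> x _ h; exact: h.
- by move=> x /= h.
- by move=> y /= hy hBy; exists y => //; rewrite /p0 /tid tsubxx.
- by move=> x /= hx; exists x => //; rewrite /tid tsubxx; case: hB.
Qed.

Lemma commsq_triv (X Y : SQ D) f : Y.2 t0 -> commsq X Y f (@tid R D) (@tid R D) f.
Proof. by move=> h x _; rewrite /tid tsubxx. Qed.

Lemma D1R1 : ses (B2C20, z) (B2, z) (cB21, z) (@tid R D) (piq 1).
Proof.
split; split.
- exact: (subquot_A0 sm_B2C20).
- exact: (subquot_A0 sm_B2).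
- exact: (subquot_A0 sm_cB21).
- by split=> x /= [].
- split=> [x /= [e [he ->]]|x /= ->]; first by exists e.
  exact: lin0 (lin_piq 1).
- by move=> x _ h; exact: h.
- by move=> x /= [_ hb]; exact: (piq_bideg hb).
- move=> y /= hy h; exists y; last by rewrite /p0 /tid tsubxx.
  split=> //; case: hy => e [he E]; rewrite E in h *; exact: (P3 (dd_deg he) h).
- move=> x /= [e [he ->]]; exists (ddd e); first by exists e.
  by rewrite /p0 tsubxx.
Qed.

Lemma Z2N0_Z2 x : Z2N0 x -> Z2 x.
Proof. by move=> [hN hz]; change (isN d21 d01 2 0 x) in hN; case: hN => hb _; split=> //; exact: (bideg_deg hb). Qed.
Lemma Z2N0_bideg x : Z2N0 x -> inBideg 2 0 x.
Proof. by move=> [hN hz]; change (isN d21 d01 2 0 x) in hN; case: hN. Qed.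
Lemma B2C20_Z2N0 x : B2C20 x -> Z2N0 x.
Proof.
move=> [hB hb]; have [hd hz] := B2_Z2 hB; split=> //.
by apply: N20 => //; [exact: (piq_bideg hb) | rewrite hz lin0 //; apply: lin_piq].
Qed.
Lemma krho_cZ22 x : krho x -> cZ22 (piq 2 x).
Proof. by move/KR=> [eta [h ->]]; rewrite piq21; apply: Z2_cZ22. Qed.
Lemma krho_piq2 y : krho y -> piq 2 y = t0 -> inBideg 1 1 y.
Proof. by move/KR=> [eta [[he _] ->]] h; apply: P3'. Qed.
Lemma piq2e u : inBideg 0 1 u -> piq 2 (piq 1 (ddd u)) = D01 d01 u.
Proof. by move=> hu; rewrite piq21 (P6 (bideg_deg hu)) bproj_id. Qed.
Lemma cB21_0 : cB21 t0.
Proof. by case: sm_cB21. Qed.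
Lemma B2_0 : B2 t0.
Proof. by case: sm_B2. Qed.
Lemma B2C20_0 : B2C20 t0.
Proof. by case: sm_B2C20. Qed.
Lemma B2C0_0 : B2C0 t0.
Proof. by case: sm_B2C0. Qed.
Lemma cB21C11_0 : cB21C11 t0.
Proof. by case: sm_cB21C11. Qed.

Lemma D1R2 : ses (Z2N0, z) (Z2, z) (krho, z) (@tid R D) (piq 1).
Proof.
split; split.
- exact: (subquot_A0 sm_Z2N0).
- exact: (subquot_A0 sm_Z2).
- exact: (subquot_A0 sm_krho).
- by split=> x /= h; [exact: Z2N0_Z2 | exact: h].
- split=> [x /= h|x /= ->]; first exact: Z2_krho.
  exact: lin0 (lin_piq 1).
- by move=> x _ h; exact: h.
- by move=> x /= h; exact: (piq_bideg (Z2N0_bideg h)).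
- move=> y /= [hy hz] h; exists y; last by rewrite /p0 /tid tsubxx.
  by split=> //; apply: N20 => //; rewrite hz lin0 //; apply: lin_piq.
- move=> x /= /KR [eta [h ->]]; exists eta => //.
  by rewrite /p0 tsubxx.
Qed.

Lemma D1R3 : ses (Z2N0, B2C20) (Z2, B2) (krho, cB21) (@tid R D) (piq 1).
Proof.
split; split.
- exact: (subquot_AB sm_Z2N0 sm_B2C20 B2C20_Z2N0).
- exact: (subquot_AB sm_Z2 sm_B2 B2_Z2).
- exact: (subquot_AB sm_krho sm_cB21 cB21_krho).
- by split=> x /= h; [exact: Z2N0_Z2 | case: h].
- split=> [x /= h|x /= [e [he ->]]]; first exact: Z2_krho.
  by exists e.
- by move=> x /= h1 h2; split=> //; exact: Z2N0_bideg.
- by move=> x /= h; rewrite /tid (piq_bideg (Z2N0_bideg h)) //; exact: cB21_0.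
- move=> y /= [hy hz] [e [he E]]; exists (tsub y (ddd e)); last first.
    by rewrite /tid tsubK; exists e.
  have hdd : ddd (tsub y (ddd e)) = t0 by rewrite (linB _ _ lin_dd) hz (dd2 he) tsubxx.
  split=> //; apply: N20.
  + by apply: degB => //; apply: dd_deg.
  + by rewrite (linB _ _ (lin_piq 1)) E tsubxx.
  + by rewrite hdd lin0 //; apply: lin_piq.
- move=> x /= /KR [eta [h ->]]; exists eta => //.
  by rewrite tsubxx; exact: cB21_0.
Qed.

Lemma D2R1 : ses (cB21C11, z) (cB21, z) (B2C0, z) (@tid R D) (piq 2).
Proof.
split; split.
- exact: (subquot_A0 sm_cB21C11).
- exact: (subquot_A0 sm_cB21).
- exact: (subquot_A0 sm_B2C0).
- by split=> x /= [].
- split=> [x /= h|x /= ->]; first exact: cB21_B2C0.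
  exact: lin0 (lin_piq 2).
- by move=> x _ h; exact: h.
- by move=> x /= [_ hb]; exact: (piq_bideg hb).
- move=> y /= hy h; exists y; last by rewrite /p0 /tid tsubxx.
  split=> //; case: hy => e [he E]; rewrite E in h *; exact: (P3' (dd_deg he) h).
- move=> x /= [u [hu ->]]; exists (piq 1 (ddd u)).
    by exists u; split=> //; exact: (bideg_deg hu).
  by rewrite /p0 piq2e // tsubxx.
Qed.

Lemma D2R2 : ses (kvrho, z) (krho, z) (cZ22, z) (@tid R D) (piq 2).
Proof.
split; split.
- exact: (subquot_A0 sm_kvrho).
- exact: (subquot_A0 sm_krho).
- exact: (subquot_A0 sm_cZ22).
- by split=> x /= [].
- split=> [x /= h|x /= ->]; first exact: krho_cZ22.
  exact: lin0 (lin_piq 2).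
- by move=> x _ h; exact: h.
- by move=> x /= [_ hb]; exact: (piq_bideg hb).
- move=> y /= hy h; exists y; last by rewrite /p0 /tid tsubxx.
  by split=> //; apply: krho_piq2.
- move=> x /= /cZ22_surj [eta [h ->]]; exists (piq 1 eta); first exact: Z2_krho.
  by rewrite /p0 piq21 tsubxx.
Qed.

Lemma D2R3 : ses (kvrho, cB21C11) (krho, cB21) (cZ22, B2C0) (@tid R D) (piq 2).
Proof.
split; split.
- by apply: (subquot_AB sm_kvrho sm_cB21C11) => x [h hb]; split=> //; exact: cB21_krho.
- exact: (subquot_AB sm_krho sm_cB21 cB21_krho).
- exact: (subquot_AB sm_cZ22 sm_B2C0 B2C0_cZ22).
- by split=> x /= [].
- split=> [x /= h|x /= h]; [exact: krho_cZ22 | exact: cB21_B2C0].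
- by move=> x /= [_ hb] h; split.
- by move=> x /= [_ hb]; rewrite /tid (piq_bideg hb) //; exact: B2C0_0.
- move=> y /= hy [u [hu E]].
  have he : cB21 (piq 1 (ddd u)) by exists u; split=> //; exact: (bideg_deg hu).
  exists (tsub y (piq 1 (ddd u))); last by rewrite /tid tsubK.
  have hk : krho (tsub y (piq 1 (ddd u))) by apply: (submodB sm_krho) => //; exact: cB21_krho.
  split=> //; apply: krho_piq2 => //.
  by rewrite (linB _ _ (lin_piq 2)) piq2e // E tsubxx.
- move=> x /= /cZ22_surj [eta [h ->]]; exists (piq 1 eta); first exact: Z2_krho.
  by rewrite piq21 tsubxx; exact: B2C0_0.
Qed.

Lemma diag1 : diagram33
    (B2C20, z) (B2, z) (cB21, z)
    (Z2N0, z) (Z2, z) (krho, z)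
    (Z2N0, B2C20) (Z2, B2) (krho, cB21)
    (@tid R D) (piq 1) (@tid R D) (piq 1) (@tid R D) (piq 1)
    (@tid R D) (@tid R D) (@tid R D) (@tid R D) (@tid R D) (@tid R D).
Proof.
split; [|split]; split.
- exact: D1R1.
- exact: D1R2.
- exact: D1R3.
- exact: (col_ses sm_Z2N0 sm_B2C20 B2C20_Z2N0).
- exact: (col_ses sm_Z2 sm_B2 B2_Z2).
- exact: (col_ses sm_krho sm_cB21 cB21_krho).
- exact: commsq_triv.
- exact: commsq_triv.
- by apply: commsq_triv; exact: B2_0.
- by apply: commsq_triv; exact: cB21_0.
Qed.

Lemma diag2 : diagram33
    (cB21C11, z) (cB21, z) (B2C0, z)
    (kvrho, z) (krho, z) (cZ22, z)
    (kvrho, cB21C11) (krho, cB21) (cZ22, B2C0)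
    (@tid R D) (piq 2) (@tid R D) (piq 2) (@tid R D) (piq 2)
    (@tid R D) (@tid R D) (@tid R D) (@tid R D) (@tid R D) (@tid R D).
Proof.
split; [|split]; split.
- exact: D2R1.
- exact: D2R2.
- exact: D2R3.
- by apply: (col_ses sm_kvrho sm_cB21C11) => x [h hb]; split=> //; exact: cB21_krho.
- exact: (col_ses sm_krho sm_cB21 cB21_krho).
- exact: (col_ses sm_cZ22 sm_B2C0 B2C0_cZ22).
- exact: commsq_triv.
- exact: commsq_triv.
- by apply: commsq_triv; exact: cB21_0.
- by apply: commsq_triv; exact: B2C0_0.
Qed.
End S.

Local Close Scope ring_scope.
Theorem theorem5p5 (R : pzRingType) (D : nat -> nat -> lmodType R)
  (d21 : forall p q, {linear D p q.+1 -> D p.+2 q})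
  (d10 : forall p q, {linear D p q -> D p.+1 q})
  (d01 : forall p q, {linear D p q -> D p q.+1})
  (dd2 : forall k (x : Tot D), inDeg k x ->
           dd d21 d10 d01 (dd d21 d10 d01 x) = tzero D) :
  let Z2 := ZC d21 d10 d01 2 in
  let B2 := cobC d21 d10 d01 1 in
  let B2C20 := pI B2 (inBideg 2 0) in
  let Z2N0 := ZN d21 d10 d01 0 2 in
  let krho := kerrho d21 d10 d01 2 in
  let kvrho := kervarrho d21 d10 d01 2 in
  let cB21 := calB d21 d10 d01 1 1 in
  let cB21C11 := pI cB21 (inBideg 1 1) in
  let B2C0 := cob0 d01 1 in
  let cZ22 := calZ d21 d10 d01 2 2 in
  let z := @p0 R D in
  let id := @tid R D in
  diagram33
    (B2C20, z) (B2, z) (cB21, z)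
    (Z2N0, z) (Z2, z) (krho, z)
    (Z2N0, B2C20) (Z2, B2) (krho, cB21)
    id (piq 1) id (piq 1) id (piq 1)
    id id id id id id
  /\
  diagram33
    (cB21C11, z) (cB21, z) (B2C0, z)
    (kvrho, z) (krho, z) (cZ22, z)
    (kvrho, cB21C11) (krho, cB21) (cZ22, B2C0)
    id (piq 2) id (piq 2) id (piq 2)
    id id id id id id.
Proof.
move=> Z2 B2 B2C20 Z2N0 krho kvrho cB21 cB21C11 B2C0 cZ22 z id.
split; [exact: (diag1 dd2) | exact: (diag2 dd2)].
Qed.
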